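(* Let $\Delta\subseteq\mathbb{Q}^d$ be a $d$-dimensional IP simplex of Gorenstein index $g$ with associated unit fraction partition $A(\Delta)=(\alpha_0,\dots,\alpha_d)$. Then $A(\Delta)=A(\Delta^* )$ and \begin{enumerate} \item $\mathrm{Vol}(\Delta)\mathrm{Vol}(\Delta^* )=\dfrac{\alpha_0\cdots\alpha_d}{g^{d+1}}$; \item $\lambda(\Delta^* )\mathrm{Vol}(\Delta)=\lambda(\Delta)\mathrm{Vol}(\Delta^* )=\dfrac{1}{g^d}\dfrac{\alpha_0\cdots\alpha_d}{\mathrm{lcm}(\alpha_0,\dots,\alpha_d)}$; \item $\lambda(\Delta)\lambda(\Delta^* )=\dfrac{1}{g^{d-1}}\dfrac{\alpha_0\cdots\alpha_d}{\mathrm{lcm}(\alpha_0,\dots,\alpha_d)^2}$. \end{enumerate}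
   Context: An IP simplex is a full-dimensional rational simplex in $\mathbb{Q}^d$ containing the origin in its interior; its dual is $\Delta^*=\{u:\langle u,v\rangle\ge-1\ \forall v\in\Delta\}$ (again an IP simplex). Gorenstein index: $g(\Delta)=g_{\mathbb{Q}}(\Delta)g_{\mathbb{Q}}(\Delta^* )$, where $g_{\mathbb{Q}}(\Delta)$ is the least $k\ge1$ with $k\Delta$ having integral vertices. $\mathrm{Vol}=d!\cdot$Euclidean volume. For an IP simplex with vertices $v_0,\dots,v_d$ its weight system is $Q_\Delta=(q_0,\dots,q_d)$, $q_i=|\det(v_j:j\neq i)|$, and $|Q_\Delta|=q_0+\dots+q_d$. The factor $\lambda(\Delta)$ is the unique positive rational such that $Q_\Delta=\lambda(\Delta)\,Q'$ with $Q'$ a tuple of positive integers with $\gcd 1$. The associated unit fraction partition is $A(\Delta)=\big(\tfrac{g|Q_\Delta|}{q_0},\dots,\tfrac{g|Q_\Delta|}{q_d}\big)$, a tuple of positive integers with $\sum_i 1/\alpha_i=1/g$. *)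

(* Defs.v *)
(* IP simplices in Q^d, encoded by their vertex matrices:
   a matrix V : 'M[rat]_(d.+1, d) whose i-th row is the vertex v_i. *)
From mathcomp Require Import all_boot all_order all_algebra.
Set Implicit Arguments. Unset Strict Implicit. Unset Printing Implicit Defensive.
Import Order.TTheory GRing.Theory Num.Theory.
Local Open Scope ring_scope.

Section IPSimplex.
Variable d : nat.
Implicit Types (V W : 'M[rat]_(d.+1, d)) (x u : 'rV[rat]_d).

Definition inner u x : rat := \sum_(j < d) u 0 j * x 0 j.

Definition in_conv V x : Prop :=
  exists c : 'I_d.+1 -> rat,
    [/\ forall i, 0 <= c i, \sum_i c i = 1 & x = \sum_i c i *: row i V].

Definition edge_mx V : 'M[rat]_d :=
  \matrix_(i < d, j < d) (V (lift ord0 i) j - V ord0 j).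

Definition full_dim V : Prop := row_free (edge_mx V).

Definition origin_interior V : Prop :=
  exists2 eps : rat, 0 < eps &
    forall x, (forall j, `|x 0 j| < eps) -> in_conv V x.

Definition IP_simplex V : Prop := full_dim V /\ origin_interior V.

Definition in_dual V u : Prop := forall x, in_conv V x -> -1 <= inner u x.

(* normalized volume Vol = d! * Euclidean volume of the simplex *)
Definition Vol V : rat := `|\det (edge_mx V)|.

Definition weight V (i : 'I_d.+1) : rat := `|\det (row' i V)|.
Definition weight_sum V : rat := \sum_i weight V i.

Definition integral_verts V (k : nat) : bool :=
  [forall i, forall j, k%:R * V i j \is a Num.int].

Lemma integral_verts_ex V : exists k, (0 < k)%N && integral_verts V k.
Proof.
exists (\prod_(p : 'I_d.+1 * 'I_d) `|denq (V p.1 p.2)|%N)%N.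
apply/andP; split.
  by rewrite prodn_gt0 // => p; rewrite absz_gt0 denq_neq0.
apply/forallP => i; apply/forallP => j.
rewrite (bigD1 (i, j)) //= natrM mulrAC.
have -> : (`|denq (V i j)|%:R * V i j : rat) = (numq (V i j))%:~R.
  by rewrite natr_absz ger0_norm ?ltW ?denq_gt0 // numqE mulrC.
by rewrite rpredM ?rpred_int ?rpred_nat.
Qed.

Definition gQ V : nat := ex_minn (integral_verts_ex V).

(* Gorenstein index g(Delta) = g_Q(Delta) g_Q(Delta^* ), where W lists the
   vertices of Delta^* *)
Definition gor V W : nat := (gQ V * gQ W)%N.

Definition is_lambda V (l : rat) : Prop :=
  0 < l /\ exists n : 'I_d.+1 -> nat,
    [/\ forall i, (0 < n i)%N, (\big[gcdn/0%N]_i n i)%N = 1%N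
      & forall i, weight V i = l * (n i)%:R].

Definition ufp V W (i : 'I_d.+1) : rat := (gor V W)%:R * weight_sum V / weight V i.

Definition ufp_seq V W : seq rat := [seq ufp V W i | i <- enum 'I_d.+1].

(* lcm(alpha_0,...,alpha_d); the alpha_i are positive integers *)
Definition ufp_lcm V W : nat := (\big[lcmn/1%N]_i Num.truncn (ufp V W i))%N.

End IPSimplex.

(* Main.v *)
Require Import Defs.
From mathcomp Require Import all_boot all_order all_algebra.
From mathcomp Require Import ring lra.
From mathcomp Require Import fingroup perm.
Import Order.TTheory GRing.Theory Num.Theory.
Local Open Scope ring_scope.
Set Implicit Arguments. Unset Strict Implicit. Unset Printing Implicit Defensive.

Section Aug.
Variable d : nat.
Implicit Types (X : 'M[rat]_(d.+1, d)).

Definition aug X : 'M[rat]_d.+1 :=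
  \matrix_(i, j) (if unlift ord0 j is Some k then X i k else 1).

Lemma aug_lift X i k : aug X i (lift ord0 k) = X i k.
Proof. by rewrite mxE liftK. Qed.

Lemma aug_0 X i : aug X i ord0 = 1.
Proof. by rewrite mxE unlift_none. Qed.

Lemma col'_aug X : col' ord0 (aug X) = X.
Proof. by apply/matrixP => i j; rewrite mxE aug_lift. Qed.

Lemma det_aug X : \det (aug X) = \det (edge_mx X).
Proof.
pose P : 'M[rat]_d.+1 := \matrix_(i, j) ((i == j)%:R - ((i != ord0) && (j == ord0))%:R).
have dP : \det P = 1.
  rewrite (expand_det_row _ ord0) big_ord_recl big1 ?addr0.
    rewrite /cofactor !mxE /= subr0 mul1r addn0 expr0 mul1r.
    rewrite -[RHS](@det1 rat d); congr (\det _); apply/matrixP => i j.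
    by rewrite !mxE /= (inj_eq lift_inj) subr0.
  move=> i _; by rewrite !mxE /= subr0 mul0r.
have PA0 i : (P *m aug X) i ord0 = (i == ord0)%:R.
  rewrite mxE; under eq_bigr do rewrite aug_0 mulr1.
  rewrite (bigD1 ord0) //=; case: (unliftP ord0 i) => [i'|] ->.
    rewrite (bigD1 (lift ord0 i')) //= big1 ?addr0.
      rewrite !mxE eqxx (eq_sym _ ord0) (negbTE (neq_lift ord0 i')) /=.
      by rewrite (inj_eq lift_inj) eqxx subr0 sub0r addNr.
    move=> k /andP[k0 ki]; by rewrite !mxE (negbTE k0) andbF subr0 eq_sym (negbTE ki).
  rewrite big1 ?addr0; first by rewrite !mxE eqxx /= subr0.
  by move=> k k0; rewrite !mxE (negbTE k0) eq_sym (negbTE k0) subrr.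
rewrite -[LHS]mul1r -dP -det_mulmx (expand_det_col _ ord0) big_ord_recl big1 ?addr0.
  rewrite PA0 eqxx mul1r /cofactor addn0 expr0 mul1r.
  congr (\det _); apply/matrixP => i j; rewrite !mxE.
  rewrite (bigD1 ord0) //= (bigD1 (lift ord0 i)) //= big1 ?addr0.
    rewrite !mxE !liftK /= eqxx /= subr0 mul1r.
    by rewrite sub0r mulN1r addrC.
  move=> k /andP[k0 ki]; rewrite !mxE (negbTE k0) andbF subr0 eq_sym (negbTE ki). by rewrite mul0r.
move=> i _; by rewrite PA0 eq_sym (negbTE (neq_lift ord0 i)) mul0r.
Qed.

Lemma aug_unit_det X : aug X \in unitmx -> \det (aug X) != 0.
Proof. by rewrite unitmxE unitfE. Qed.

Lemma weight_c X (c : 'rV[rat]_d.+1) : aug X \in unitmx ->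
  c *m aug X = delta_mx 0 ord0 -> forall i, weight X i = `|\det (aug X)| * `|c 0 i|.
Proof.
move=> uA ce i; have dA := aug_unit_det uA.
have -> : c = delta_mx 0 ord0 *m invmx (aug X) by rewrite -ce mulmxK.
rewrite -rowE mxE /invmx uA !mxE /cofactor col'_aug addn0.
rewrite !normrM normfV normrX normrN1 expr1n mul1r mulrA mulfV ?mul1r //.
by rewrite normr_eq0.
Qed.

Lemma conv_aug X (c : 'I_d.+1 -> rat) : \sum_i c i = 1 -> \sum_i c i *: row i X = 0 ->
  (\row_i c i) *m aug X = delta_mx 0 ord0.
Proof.
move=> c1 c0; apply/matrixP => a l; rewrite ord1 !mxE.
case: (unliftP ord0 l) => [k|] ->.
  rewrite eqxx /=.
  transitivity ((\sum_i c i *: row i X) 0 k); last by rewrite c0 mxE.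
  by rewrite summxE; apply: eq_bigr => i _; rewrite aug_lift !mxE.
rewrite !eqxx /= -c1; apply: eq_bigr => i _; by rewrite aug_0 !mxE mulr1.
Qed.
End Aug.
Lemma lambda_uniq k (n m : 'I_k -> nat) (a b : rat) : 0 < a -> 0 < b ->
  (\big[gcdn/0]_i n i)%N = 1%N -> (\big[gcdn/0]_i m i)%N = 1%N ->
  (forall i, a * (n i)%:R = b * (m i)%:R) -> a = b.
Proof.
move=> a0 b0 gn gm e.
pose x := a / b.
have x0 : 0 < x by rewrite divr_gt0.
have xe i : x * (n i)%:R = (m i)%:R.
  by rewrite /x mulrAC e mulrAC divff ?mul1r // gt_eqF.
pose p := `|numq x|%N; pose q := `|denq x|%N.
have pE : (p%:R : rat) = (numq x)%:~R.
  by rewrite natr_absz ger0_norm // numq_ge0 ltW.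
have qE : (q%:R : rat) = (denq x)%:~R.
  by rewrite natr_absz ger0_norm // ltW // denq_gt0.
have cpq : coprime p q by apply: coprime_num_den.
have cqp : coprime q p by rewrite coprime_sym.
have key i : (p * n i = q * m i)%N.
  apply/eqP; rewrite -(@eqr_nat rat) !natrM pE qE numqE.
  by rewrite mulrAC xe mulrC.
have q1 : q = 1%N.
  apply/eqP; rewrite -dvdn1 -gn; apply/dvdn_biggcdP => i _.
  by rewrite -(Gauss_dvdr (n i) cqp) key dvdn_mulr.
have p1 : p = 1%N.
  apply/eqP; rewrite -dvdn1 -gm; apply/dvdn_biggcdP => i _.
  by rewrite -(Gauss_dvdr (m i) cpq) -key dvdn_mulr.
have : x = 1.
  by rewrite -[x]divq_num_den -pE -qE p1 q1 divr1.
by move=> /(congr1 (fun y => y * b)); rewrite /x divfK ?gt_eqF // mul1r.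
Qed.

Lemma lcm_uniq k (a n : 'I_k.+1 -> nat) (K : nat) :
  (forall i, 0 < a i)%N -> (\big[gcdn/0]_i n i)%N = 1%N ->
  (forall i, a i * n i = K)%N -> (\big[lcmn/1]_i a i)%N = K.
Proof.
move=> a0 gn aK.
set l := (\big[lcmn/1]_i a i)%N.
have lK : (l %| K)%N by apply/dvdn_biglcmP => i _; rewrite -(aK i) dvdn_mulr.
have al i : (a i %| l)%N by move/dvdn_biglcmP: (dvdnn l); apply.
case/dvdnP: lK => t Kt.
suff t1 : t = 1%N by rewrite Kt t1 mul1n.
apply/eqP; rewrite -dvdn1 -gn; apply/dvdn_biggcdP => i _.
case/dvdnP: (al i) => ki lk.
have : (a i * n i = a i * (t * ki))%N by rewrite aK Kt lk mulnA mulnC.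
move/eqP; rewrite eqn_pmul2l // => /eqP ->.
by rewrite dvdn_mulr.
Qed.

Section Main.
Variable d : nat.
Variables V W : 'M[rat]_(d.+1, d).
Hypothesis HV : IP_simplex V.
Hypothesis HW : forall u : 'rV[rat]_d, in_conv W u <-> in_dual V u.
Variables lV lW : rat.
Hypothesis HlV : is_lambda V lV.
Hypothesis HlW : is_lambda W lW.

Local Notation M := (aug V).
Local Notation Mi := (invmx (aug V)).

Lemma uM : M \in unitmx.
Proof.
case: HV => fd _; move: fd; rewrite /full_dim row_free_unit !unitmxE.
by rewrite det_aug.
Qed.

Definition beta i := Mi ord0 i.
Definition rbeta : 'rV[rat]_d.+1 := \row_i beta i.

Lemma rbetaM : rbeta *m M = delta_mx 0 ord0.
Proof.
have -> : rbeta = delta_mx 0 ord0 *m Mi.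
  by apply/matrixP => a i; rewrite ord1 -rowE !mxE.
by rewrite mulmxKV // uM.
Qed.

Lemma beta_ge0 i : 0 <= beta i.
Proof.
case: HV => _ [eps eps0 /(_ 0)].
case=> [j|]; first by rewrite mxE normr0.
move=> c [c0 c1 cx].
have := conv_aug c1 (esym cx); rewrite -rbetaM => /(can_inj (mulmxK uM)).
by move/matrixP/(_ 0 i); rewrite !mxE => <-.
Qed.

Lemma weightV i : weight V i = `|\det M| * beta i.
Proof. by rewrite (weight_c uM rbetaM) mxE (ger0_norm (beta_ge0 i)). Qed.

Lemma sum_beta : \sum_i beta i = 1.
Proof.
rewrite -[RHS](_ : (rbeta *m M) 0 ord0 = 1); last by rewrite rbetaM mxE !eqxx.
rewrite mxE; by apply: eq_bigr => i _; rewrite aug_0 mxE mulr1.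
Qed.

Lemma weight_sumV : weight_sum V = `|\det M|.
Proof.
by rewrite /weight_sum; under eq_bigr do rewrite weightV; rewrite -mulr_sumr sum_beta mulr1.
Qed.

Lemma VolV : Vol V = `|\det M|.
Proof. by rewrite /Vol det_aug. Qed.

Lemma beta_gt0 i : 0 < beta i.
Proof.
case: HlV => l0 [n [n0 _ wn]].
have : 0 < weight V i by rewrite wn mulr_gt0 // ltr0n.
rewrite weightV => w0; rewrite lt_def beta_ge0 andbT; apply/eqP => b0.
by move: w0; rewrite b0 mulr0 ltxx.
Qed.


Lemma beta_neq0 i : beta i != 0.
Proof. by rewrite gt_eqF // beta_gt0. Qed.

Definition N : 'M[rat]_d.+1 := \matrix_(i, l) (Mi l i / beta i).
Definition U : 'M[rat]_(d.+1, d) := \matrix_(i, k) N i (lift ord0 k).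

Lemma N0 i : N i ord0 = 1.
Proof. by rewrite mxE divff // beta_neq0. Qed.

Lemma augU : aug U = N.
Proof.
apply/matrixP => i l; case: (unliftP ord0 l) => [k|] ->.
  by rewrite aug_lift mxE.
by rewrite aug_0 N0.
Qed.

Lemma MN j i : \sum_l M j l * N i l = (j == i)%:R / beta i.
Proof.
have e : (M *m Mi) j i = (j == i)%:R by rewrite mulmxV ?uM // mxE.
rewrite -e mxE mulr_suml; apply: eq_bigr => l _. by rewrite [N _ _]mxE mulrA.
Qed.

Lemma inner_UV j i : 1 + \sum_k V j k * U i k = (j == i)%:R / beta i.
Proof.
rewrite -MN big_ord_recl aug_0 N0 mulr1; congr (_ + _).
by apply: eq_bigr => k _; rewrite aug_lift mxE.
Qed.

Lemma betaN : rbeta *m N = delta_mx 0 ord0.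
Proof.
apply/matrixP => a l; rewrite ord1 mxE.
have e : (Mi *m M) l ord0 = (l == ord0)%:R by rewrite mulVmx ?uM // mxE.
rewrite !mxE eqxx /= -e mxE; apply: eq_bigr => i _.
by rewrite aug_0 mulr1 [rbeta _ _]mxE [N _ _]mxE mulrC divfK // beta_neq0.
Qed.

Lemma MNdiag : M *m N^T = diag_mx (\row_i (beta i)^-1).
Proof.
apply/matrixP => j i; rewrite mxE.
rewrite (_ : \sum_l M j l * N^T l i = \sum_l M j l * N i l); last first.
  by apply: eq_bigr => l _; rewrite [N^T _ _]mxE.
rewrite MN !mxE; case: (eqVneq j i) => [->|_]; first by rewrite mul1r mulr1n.
by rewrite mul0r mulr0n.
Qed.

Lemma detMN : \det M * \det N = \prod_i (beta i)^-1.
Proof.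
rewrite -(det_tr N) -det_mulmx MNdiag det_diag; apply: eq_bigr => i _; by rewrite mxE.
Qed.

Lemma detN_neq0 : \det N != 0.
Proof.
apply/eqP => h; have := detMN; rewrite h mulr0 => /esym/eqP.
by rewrite prodf_seq_eq0 => /hasP[i _ /=]; rewrite invr_eq0 (negbTE (beta_neq0 i)).
Qed.



Lemma row_in_conv (X : 'M[rat]_(d.+1, d)) j : in_conv X (row j X).
Proof.
exists (fun i => (i == j)%:R); split.
- by move=> i; rewrite ler0n.
- by rewrite (bigD1 j) //= big1 ?addr0 ?eqxx // => i /negbTE ->.
- rewrite (bigD1 j) //= big1 ?addr0 ?eqxx ?scale1r // => i /negbTE ->.
  by rewrite scale0r.
Qed.

Lemma inner_conv (u : 'rV[rat]_d) (X : 'M[rat]_(d.+1, d)) (c : 'I_d.+1 -> rat) :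
  inner u (\sum_j c j *: row j X) = \sum_j c j * inner u (row j X).
Proof.
rewrite /inner; under eq_bigr do rewrite summxE mulr_sumr.
rewrite exchange_big /=; apply: eq_bigr => j _; rewrite mulr_sumr.
by apply: eq_bigr => k _; rewrite !mxE mulrCA.
Qed.

Lemma inner_convl (v : 'rV[rat]_d) (X : 'M[rat]_(d.+1, d)) (c : 'I_d.+1 -> rat) :
  inner (\sum_j c j *: row j X) v = \sum_j c j * inner (row j X) v.
Proof.
rewrite /inner; under eq_bigr do rewrite summxE mulr_suml.
rewrite exchange_big /=; apply: eq_bigr => j _; rewrite mulr_sumr.
by apply: eq_bigr => k _; rewrite !mxE mulrA.
Qed.

Lemma inner_UV' i j : inner (row i U) (row j V) = (j == i)%:R / beta i - 1.
Proof.
rewrite -inner_UV addrC addKr /inner; apply: eq_bigr => k _.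
by rewrite !mxE mulrC.
Qed.

Lemma u_in_dual i : in_dual V (row i U).
Proof.
move=> x [c [c0 c1 ->]]; rewrite inner_conv.
rewrite -c1 -sumrN; apply: ler_sum => j _; rewrite inner_UV' mulrBr mulr1.
rewrite addrC lerDl mulr_ge0 // divr_ge0 ?ler0n //; exact: beta_ge0.
Qed.

Lemma w_dual k j : -1 <= inner (row k W) (row j V).
Proof.
have /HW hk := row_in_conv W k.
exact: hk (row_in_conv V j).
Qed.

Definition bb j (w : 'rV[rat]_d) := beta j * (1 + inner w (row j V)).

Lemma recon (w : 'rV[rat]_d) l :
  \sum_j bb j w * N j l = if unlift ord0 l is Some k then w 0 k else 1.
Proof.
pose z : 'rV[rat]_d.+1 := \row_l' (if unlift ord0 l' is Some k then w 0 k else 1).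
have -> : (if unlift ord0 l is Some k then w 0 k else 1) = z 0 l by rewrite mxE.
have -> : z = (z *m M^T) *m Mi^T by rewrite -mulmxA -trmx_mul mulVmx ?uM // trmx1 mulmx1.
rewrite mxE; apply: eq_bigr => j _.
rewrite /bb [N _ _]mxE [Mi^T _ _]mxE.
have fe (a b c : rat) : c != 0 -> c * a * (b / c) = a * b.
  by move=> c0; field.
rewrite fe ?beta_neq0 //.
congr (_ * _); rewrite mxE big_ord_recl [z 0 ord0]mxE unlift_none [M^T _ _]mxE aug_0 mul1r.
congr (_ + _); apply: eq_bigr => k _.
by rewrite [z _ _]mxE liftK [M^T _ _]mxE aug_lift !mxE.
Qed.


Lemma bb_u j i : bb j (row i U) = (j == i)%:R.
Proof.
rewrite /bb inner_UV' addrC subrK; case: (eqVneq j i) => [->|_].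
  by rewrite mul1r divff ?beta_neq0.
by rewrite mul0r mulr0.
Qed.

Lemma bb_ge0 k j : 0 <= bb j (row k W).
Proof.
rewrite /bb mulr_ge0 ?beta_ge0 //; have := w_dual k j.
by rewrite -subr_ge0 opprK addrC.
Qed.

Lemma ex_row i : exists k, row k W = row i U.
Proof.
have /HW [e [e0 e1 ue]] := u_in_dual i.
have lin j : bb j (row i U) = \sum_k e k * bb j (row k W).
  rewrite {1}ue /bb inner_convl.
  under [RHS]eq_bigr do rewrite mulrCA.
  rewrite -mulr_sumr; congr (_ * _).
  under [RHS]eq_bigr do rewrite mulrDr mulr1.
  by rewrite big_split /= e1.
have [k0 ek0] : exists k, e k != 0.
  case: (pickP (fun k => e k != 0)) => [k0 ek0 | h]; first by exists k0.
  move: e1; rewrite big1 => [/eqP|k _]; first by rewrite eq_sym oner_eq0.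
  by have := h k => /negbFE/eqP.
have z j : j != i -> bb j (row k0 W) = 0.
  move=> ji; have := lin j; rewrite bb_u (negbTE ji) => /esym/eqP.
  rewrite psumr_eq0 => [/allP/(_ k0 (mem_index_enum _))|k _]; last first.
    by rewrite mulr_ge0 ?bb_ge0.
  by rewrite /= mulf_eq0 (negbTE ek0) => /eqP.
have sb l : \sum_j bb j (row k0 W) * N j l = bb i (row k0 W) * N i l.
  rewrite (bigD1 i) //= big1 ?addr0 // => j ji; by rewrite z ?mul0r.
have b1 : bb i (row k0 W) = 1.
  by have := recon (row k0 W) ord0; rewrite sb N0 mulr1 unlift_none.
exists k0; apply/matrixP => a k; rewrite ord1.
have := recon (row k0 W) (lift ord0 k); rewrite sb b1 mul1r liftK => <-.
by rewrite !mxE.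
Qed.


Definition f i : 'I_d.+1 := odflt ord0 [pick k | row k W == row i U].

Lemma fP i : row (f i) W = row i U.
Proof.
rewrite /f; case: pickP => [k /eqP //|h].
by have [k /eqP] := ex_row i; rewrite h.
Qed.

Lemma U_inj i i' : row i U = row i' U -> i = i'.
Proof.
move=> e; apply/eqP; apply/negP => /negP ne.
have := inner_UV i i'; rewrite (negbTE ne) mul0r.
have -> : \sum_k V i k * U i' k = \sum_k V i k * U i k.
  apply: eq_bigr => k _; have /matrixP/(_ 0 k) := e; rewrite !mxE => ->.
  by [].
rewrite inner_UV eqxx mul1r => /eqP; rewrite invr_eq0; apply/negP; exact: beta_neq0.
Qed.

Lemma f_inj : injective f.
Proof. by move=> i i' e; apply: U_inj; rewrite -!fP e. Qed.

Definition tau : {perm 'I_d.+1} := (perm f_inj)^-1.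

Lemma Wrow j k : W j k = U (tau j) k.
Proof.
have := fP (tau j); rewrite -(permE f_inj) permKV => /matrixP/(_ 0 k).
by rewrite !mxE.
Qed.

Lemma augW : aug W = row_perm tau N.
Proof.
apply/matrixP => j l; rewrite [RHS]mxE; case: (unliftP ord0 l) => [k|] ->.
  by rewrite aug_lift Wrow mxE.
by rewrite aug_0 N0.
Qed.

Lemma absdetW : `|\det (aug W)| = `|\det N|.
Proof.
by rewrite augW row_permE det_mulmx det_perm normrM normrX normrN1 expr1n mul1r.
Qed.

Lemma uW : aug W \in unitmx.
Proof.
rewrite unitmxE unitfE -normr_eq0 absdetW normr_eq0; exact: detN_neq0.
Qed.

Lemma betaW : (\row_j beta (tau j)) *m aug W = delta_mx 0 ord0.
Proof.
rewrite -betaN augW; apply/matrixP => a l; rewrite ord1 !mxE.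
rewrite [RHS](reindex_inj (@perm_inj _ tau)) /=; apply: eq_bigr => i _.
by rewrite !mxE.
Qed.

Lemma weightW j : weight W j = `|\det N| * beta (tau j).
Proof.
by rewrite (weight_c uW betaW) absdetW mxE (ger0_norm (beta_ge0 _)).
Qed.

Lemma weight_sumW : weight_sum W = `|\det N|.
Proof.
rewrite /weight_sum; under eq_bigr do rewrite weightW.
have e : \sum_i beta (tau i) = 1.
  by rewrite -sum_beta [RHS](reindex_inj (@perm_inj _ tau)).
by rewrite -mulr_sumr e mulr1.
Qed.

Lemma VolW : Vol W = `|\det N|.
Proof. by rewrite /Vol -det_aug absdetW. Qed.


Lemma gQ_spec (X : 'M[rat]_(d.+1, d)) : (0 < gQ X)%N && integral_verts X (gQ X).
Proof. by rewrite /gQ; case: ex_minnP. Qed.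

Lemma detM_neq0 : \det M != 0.
Proof. by have := uM; rewrite unitmxE unitfE. Qed.

Lemma g_gt0 : 0 < ((gor V W)%:R : rat).
Proof.
rewrite ltr0n /gor muln_gt0.
by case/andP: (gQ_spec V) => -> _; case/andP: (gQ_spec W) => -> _.
Qed.

Lemma ufpV i : ufp V W i = (gor V W)%:R / beta i.
Proof.
rewrite /ufp weight_sumV weightV invfM mulrA -(mulrA _ `|_|) divff ?mulr1 //.
by rewrite normr_eq0 detM_neq0.
Qed.

Lemma ufpW j : ufp W V j = (gor V W)%:R / beta (tau j).
Proof.
rewrite /ufp weight_sumW weightW invfM mulrA -(mulrA _ `|_|) divff ?mulr1 //.
  by rewrite /gor mulnC.
by rewrite normr_eq0 detN_neq0.
Qed.

Lemma alpha_int i : ufp V W i \is a Num.int.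
Proof.
rewrite ufpV.
have e : (beta i)^-1 = 1 + \sum_k V i k * U i k by rewrite inner_UV eqxx mul1r.
rewrite e /gor natrM mulrDr mulr1 rpredD //; first by rewrite rpredM ?rpred_nat.
rewrite mulr_sumr rpred_sum // => k _.
case/andP: (gQ_spec V) => _ /forallP/(_ i)/forallP/(_ k) hV.
case/andP: (gQ_spec W) => _ /forallP/(_ (f i))/forallP/(_ k) hW.
have -> : U i k = W (f i) k by have /matrixP/(_ 0 k) := fP i; rewrite !mxE.
rewrite (_ : _ * _ * _ = ((gQ V)%:R * V i k) * ((gQ W)%:R * W (f i) k)).
  exact: rpredM.
by rewrite mulrACA.
Qed.

Lemma alpha_gt0 i : 0 < ufp V W i.
Proof. by rewrite ufpV divr_gt0 ?g_gt0 ?beta_gt0. Qed.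

Lemma alpha_trunc i : ((Num.truncn (ufp V W i))%:R : rat) = ufp V W i.
Proof.
have : ufp V W i \is a Num.nat by rewrite natrEint alpha_int ltW ?alpha_gt0.
by rewrite natrEtruncn => /eqP.
Qed.


Lemma ufp_perm : perm_eq (ufp_seq V W) (ufp_seq W V).
Proof.
rewrite /ufp_seq.
have -> : [seq ufp W V j | j <- enum 'I_d.+1] =
          [seq ufp V W i | i <- [seq tau j | j <- enum 'I_d.+1]].
  by rewrite -[RHS]map_comp; apply: eq_map => j; rewrite /= ufpW ufpV.
apply: perm_map; apply: uniq_perm; rewrite ?enum_uniq //.
  by rewrite map_inj_uniq ?enum_uniq //; exact: perm_inj.
move=> x; rewrite mem_enum; apply/esym/mapP; exists ((tau^-1)%g x); first by rewrite mem_enum.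
by rewrite permKV.
Qed.

Lemma lV_gt0 : 0 < lV. Proof. by case: HlV. Qed.

Lemma Lval : ((ufp_lcm V W)%:R : rat) = (gor V W)%:R * `|\det M| / lV.
Proof.
case: HlV => l0 [n [n0 gn wn]].
have an i : ufp V W i * (n i)%:R = (gor V W)%:R * `|\det M| / lV.
  rewrite ufpV.
  have -> : beta i = lV * (n i)%:R / `|\det M|.
    rewrite -wn weightV mulrAC divff ?mul1r //; by rewrite normr_eq0 detM_neq0.
  field; rewrite normr_eq0 detM_neq0 gt_eqF ?lV_gt0 //=.
  by rewrite pnatr_eq0 -lt0n n0.
rewrite /ufp_lcm (@lcm_uniq _ _ n (Num.truncn (ufp V W ord0) * n ord0)%N) //.
- by rewrite natrM alpha_trunc an.
- by move=> i; rewrite -(ltr0n rat) alpha_trunc alpha_gt0.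
- move=> i; apply/eqP; rewrite -(@eqr_nat rat) !natrM !alpha_trunc !an //.
Qed.

Lemma lWval : lW = `|\det N| * lV / `|\det M|.
Proof.
case: HlV => l0 [n [n0 gn wn]].
case: HlW => l0' [m [m0 gm wm]].
have A0 : `|\det M| != 0 by rewrite normr_eq0 detM_neq0.
apply/esym; apply: (@lambda_uniq _ (fun j => n (tau j)) m).
- by rewrite !divr_gt0 ?mulr_gt0 ?normr_gt0 ?detN_neq0 ?detM_neq0.
- exact: l0'.
- by rewrite -gn [RHS](reindex_inj (@perm_inj _ tau)).
- exact: gm.
- move=> j; rewrite -wm weightW.
  have -> : beta (tau j) = lV * (n (tau j))%:R / `|\det M|.
    by rewrite -wn weightV mulrAC divff ?mul1r.
  by field.
Qed.

Lemma main_res :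
  let g : rat := (gor V W)%:R in
  let P : rat := \prod_(i < d.+1) ufp V W i in
  let L : rat := (ufp_lcm V W)%:R in
  [/\ perm_eq (ufp_seq V W) (ufp_seq W V),
      Vol V * Vol W = P / g ^+ d.+1,
      lW * Vol V = P / (g ^+ d * L) /\ lV * Vol W = P / (g ^+ d * L)
    & lV * lW = P / (g ^ (d%:Z - 1) * L ^+ 2)].
Proof.
move=> g P L.
have g0 : g != 0 by rewrite gt_eqF // g_gt0.
have A0 : `|\det M| != 0 by rewrite normr_eq0 detM_neq0.
have B0 : `|\det N| != 0 by rewrite normr_eq0 detN_neq0.
have l0 : lV != 0 by rewrite gt_eqF // lV_gt0.
have PE : P = g ^+ d.+1 * (`|\det M| * `|\det N|).
  rewrite /P; under eq_bigr do rewrite ufpV.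
  rewrite big_split /= prodr_const card_ord -normrM detMN ger0_norm //.
  by apply: prodr_ge0 => i _; rewrite invr_ge0 beta_ge0.
have LE : L = g * `|\det M| / lV by rewrite /L Lval.
split.
- exact: ufp_perm.
- by rewrite VolV VolW PE; field; rewrite ?expf_neq0 ?g0.
- rewrite VolV VolW PE LE lWval exprS; split; field; by rewrite ?expf_neq0 ?g0 ?A0 ?l0 ?B0.
have gz : g ^ (d%:Z) = g ^+ d by [].
rewrite PE LE lWval expfzDr // exprN1 gz exprS; field; by rewrite ?expf_neq0 ?g0 ?A0 ?l0 ?B0.
Qed.

End Main.

Theorem proposition2p10 (d : nat) (V W : 'M[rat]_(d.+1, d))
  (HV : IP_simplex V)
  (HW : forall u : 'rV[rat]_d, in_conv W u <-> in_dual V u)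
  (lV lW : rat) (HlV : is_lambda V lV) (HlW : is_lambda W lW) :
  let g : rat := (gor V W)%:R in
  let P : rat := \prod_(i < d.+1) ufp V W i in
  let L : rat := (ufp_lcm V W)%:R in
  [/\ perm_eq (ufp_seq V W) (ufp_seq W V),
      Vol V * Vol W = P / g ^+ d.+1,
      lW * Vol V = P / (g ^+ d * L) /\ lV * Vol W = P / (g ^+ d * L)
    & lV * lW = P / (g ^ (d%:Z - 1) * L ^+ 2)].
Proof. exact: (main_res HV HW HlV HlW). Qed.
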